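(* For every $\pi\in B_n$, $\ell_B(\pi)\equiv\ell_B(dp(\pi))\pmod 2$.
   Context: $B_n$ is the set of words $\pi=\pi_1\cdots\pi_n$ with $\pi_i\in\{\pm1,\dots,\pm n\}$ and $|\pi_1|\cdots|\pi_n|$ a permutation of $[n]$. $\mathrm{inv}(\pi)=\#\{(i,j):i<j,\pi_i>\pi_j\}$ (usual order), $\ell_B(\pi)=\mathrm{inv}(\pi)-\sum_{i:\pi_i<0}\pi_i$ (equal to $0$ for the empty word). For a word of nonzero integers with distinct absolute values $a_1<\dots<a_m$, its reduction replaces each letter $\pm a_j$ by $\pm j$. $dp(\pi)$ is the reduction of the subword of letters $\pi_i$ with $\pi_i\ne i$. *)

(* Defs.v *)
From mathcomp Require Import all_boot all_order all_algebra.
Set Implicit Arguments. Unset Strict Implicit. Unset Printing Implicit Defensive.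
Import Order.TTheory GRing.Theory Num.Theory.
Local Open Scope ring_scope.

(* Words are sequences of integers; positions are 1-based in the paper,
   0-based for nth here. *)

Definition inB (n : nat) (w : seq int) : bool :=
  (size w == n)%N && perm_eq (map (fun x : int => absz x) w) (iota 1 n).

Definition inv (w : seq int) : nat :=
  (\sum_(i < size w) \sum_(j < size w | (i < j)%N)
     ((nth 0%R w j < nth 0%R w i)%R : nat))%N.

Definition ellB (w : seq int) : int :=
  (inv w)%:Z - \sum_(x <- w | x < 0) x.

(* reduction: letter +-a_j (a_1 < ... < a_m the absolute values) becomes +-j;
   j = 1 + number of letters whose absolute value is smaller. *)
Definition reduce (w : seq int) : seq int :=
  map (fun x : int =>
         (if x < 0 then -1 else 1) *
         ((count (fun y : int => (absz y < absz x)%N) w).+1)%:Z) w.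

Definition dp (w : seq int) : seq int :=
  reduce [seq p.1 | p <- zip w (map (fun k : nat => k%:Z) (iota 1 (size w)))
                  & p.1 != p.2].

(* Main.v *)
Require Import Defs.
From mathcomp Require Import all_boot all_order all_algebra.
From mathcomp Require Import zify.
Import Order.TTheory GRing.Theory Num.Theory.

Fixpoint invr (s : seq int) : nat :=
  if s is a :: s' then count (fun y => (y < a)%R) s' + invr s' else 0.

Lemma count_sum (T : Type) (P : pred T) (s : seq T) :
  count P s = \sum_(y <- s) (P y : nat).
Proof. elim: s => [|a s IH]; by rewrite ?big_nil ?big_cons //= IH. Qed.

Lemma inv_invr s : Defs.inv s = invr s.
Proof.
elim: s => [|a s IH]; first by rewrite /Defs.inv big_ord0.
rewrite /= -IH /Defs.inv /= big_ord_recl /=; congr (_ + _).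
  rewrite big_mkcond big_ord_recl /= add0n count_sum (big_nth 0%R) big_mkord.
  idtac.
  by [].
apply: eq_bigr => i _.
rewrite (big_mkcond (fun j : 'I_(size s).+1 => _ < _)%N) big_ord_recl /= add0n.
rewrite [in RHS]big_mkcond; apply: eq_bigr => j _ /=.
by rewrite /bump !leq0n !add1n ltnS.
Qed.

Lemma invr_map (g : nat -> int) (idx : seq nat) : sorted ltn idx ->
  invr (map g idx) =
  \sum_(i <- idx) \sum_(j <- idx) ((i < j) && (g j < g i)%R : nat).
Proof.
elim: idx => [|i r IH] Hs; first by rewrite big_nil.
have Hall : all (ltn i) r.
  by apply: order_path_min Hs => x y z; apply: ltn_trans.
have Hr : sorted ltn r by apply: path_sorted Hs.
rewrite /= big_cons big_cons ltnn /= add0n IH //; congr (_ + _).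
  rewrite count_map count_sum; apply: eq_big_seq => j Hj.
  by move/allP: Hall => /(_ j Hj) /= ->.
apply: eq_big_seq => i' Hi'; rewrite big_cons.
move/allP: Hall => /(_ i' Hi') /= Hii'.
by rewrite ltnNge (ltnW Hii').
Qed.

Lemma invr_mono (f : int -> int) s :
  {in s &, forall x y, (f y < f x)%R = (y < x)%R} -> invr (map f s) = invr s.
Proof.
elim: s => [//|a s IH] H /=.
rewrite IH; last by move=> x y Hx Hy; apply: H; rewrite inE ?Hx ?Hy orbT.
congr (_ + _); rewrite count_map; apply: eq_in_count => y Hy /=.
by apply: H; rewrite inE ?Hy ?eqxx ?orbT.
Qed.

Lemma count_split (T : Type) (a b : pred T) s :
  count a s = count (fun y => a y && b y) s + count (fun y => a y && ~~ b y) s.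
Proof.
elim: s => [//|y s IH] /=; rewrite IH.
by case: (a y); case: (b y) => /=; rewrite ?add0n ?add1n ?addnS ?addSn.
Qed.

Definition cnt (u : seq int) (m : nat) := count (fun y : int => (absz y < m)%N) u.

Lemma cnt_lt u x m : x \in u -> (absz x < m)%N -> (cnt u (absz x) < cnt u m)%N.
Proof.
move=> Hx Hm; rewrite /cnt [X in (_ < X)%N](@count_split _ (fun y : int => (absz y < m)%N) (fun y : int => (absz y < absz x)%N) u).
rewrite (@eq_count _ (fun y : int => (absz y < m)%N && (absz y < absz x)%N)
  (fun y : int => (absz y < absz x)%N)); last first.
  by move=> y /=; apply/idP/idP => [/andP[]//|H]; rewrite H (ltn_trans H Hm).
rewrite -[X in (X < _)%N]addn0 ltn_add2l -has_count; apply/hasP; exists x => //.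
by rewrite Hm ltnn.
Qed.

Definition rf (u : seq int) (x : int) : int :=
  ((if (x < 0)%R then -1 else 1) * ((cnt u (absz x)).+1)%:Z)%R.

Lemma reduce_rf u : reduce u = map (rf u) u.
Proof. by []. Qed.

Lemma rf_mono u x y : x \in u -> y \in u -> x != 0%R -> y != 0%R ->
  (rf u y < rf u x)%R = (y < x)%R.
Proof.
move=> Hx Hy nx ny.
have H1 : (absz x < absz y)%N -> (cnt u (absz x) < cnt u (absz y))%N by apply: cnt_lt.
have H2 : (absz y < absz x)%N -> (cnt u (absz y) < cnt u (absz x))%N by apply: cnt_lt.
have H3 : absz y = absz x -> cnt u (absz y) = cnt u (absz x) by move=> ->.
rewrite /rf.
move: (cnt u (absz x)) (cnt u (absz y)) H1 H2 H3 => cx cy H1 H2 H3.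
move: x y nx ny {Hx Hy} H1 H2 H3 => [a|a] [b|b] /= nx ny H1 H2 H3.
all: rewrite ?mul1r ?mulN1r.
all: lia.
Qed.

Definition sN (s : seq int) : nat := \sum_(y <- s) (((y < 0)%R : nat) * absz y).

Lemma ellBE s : ellB s = Posz (Defs.inv s + sN s).
Proof.
rewrite /ellB PoszD; congr (_ + _)%R.
rewrite /sN; elim: s => [|y s IH]; first by rewrite !big_nil.
rewrite !big_cons; case: y => [m|m] /=.
  by rewrite mul0n add0n.
by rewrite mul1n PoszD -IH NegzE opprD opprK.
Qed.

Lemma sN_reduce u : sN (reduce u) = \sum_(y <- u) (((y < 0)%R : nat) * (cnt u (absz y)).+1).
Proof.
rewrite reduce_rf /sN big_map; apply: eq_bigr => y _.
rewrite /rf; case: y => [m|m] /=; rewrite ?mul1r ?mulN1r ?muln1 //.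
Qed.

Lemma iota1 n : iota 1 n = map S (iota 0 n).
Proof. by rewrite -[1]/(1 + 0)%N iotaDl; apply: eq_map => i; rewrite add1n. Qed.

Lemma dp_eq w : dp w = reduce (map (nth 0%R w)
   (filter (fun i => nth 0%R w i != Posz i.+1) (iota 0 (size w)))).
Proof.
rewrite /dp; congr reduce.
rewrite iota1 -map_comp.
rewrite -[in zip w _](mkseq_nth 0%R w) /mkseq size_map size_iota zip_map filter_map -map_comp.
by [].
Qed.

Lemma count_iota_lt m a n : a <= n -> count (fun v => v < m + a) (iota m n) = a.
Proof.
move=> H; rewrite -(subnKC H) iotaD count_cat.
rewrite (@eq_in_count _ _ predT); last by move=> v; rewrite mem_iota => /andP[].
rewrite count_predT size_iota.
rewrite (@eq_in_count _ _ pred0) ?count_pred0 ?addn0 //.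
by move=> v; rewrite mem_iota /= => /andP[h _]; rewrite ltnNge h.
Qed.

Lemma ptw (i p : nat) (v : int) : (i = p -> v = Posz p.+1) -> (i <> p -> absz v <> p.+1) -> v <> 0%R ->
  ((i < p) && (Posz p.+1 < v)%R : nat) + ((p < i) && (v < Posz p.+1)%R : nat)
  + (((v < 0)%R && (p.+1 < absz v)) : nat) + 2 * ((i < p) && (absz v < p.+1))
  = (i < p : nat) + (absz v < p.+1 : nat) + 2 * [&& p < i, (v < 0)%R & ~~ (absz v < p.+1)].
Proof.
move=> H1 H2 H3.
case: v H1 H2 H3 => [m|m] /= H1 H2 H3.
all: lia.
Qed.

Section Key.
Variables (n : nat) (x : nat -> int).
Hypothesis Hnz : forall i, i < n -> x i != 0%R.
Hypothesis Hinj : forall i j, i < n -> j < n -> absz (x i) = absz (x j) -> i = j.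
Hypothesis Hle : forall i, i < n -> 0 < absz (x i) <= n.
Hypothesis Hcnt : forall a, a <= n -> \sum_(j <- iota 0 n) (absz (x j) < a.+1 : nat) = a.
Let F i := x i == Posz i.+1.
Let I := iota 0 n.

Lemma E1 : \sum_(i <- I) \sum_(j <- I) ((i<j) && (x j < x i)%R : nat) =
  \sum_(i <- I) \sum_(j <- I) ([&& ~~ F i, ~~ F j, i < j & (x j < x i)%R] : nat)
  + (\sum_(i <- I) \sum_(j <- I) ([&& F j, i < j & (Posz j.+1 < x i)%R] : nat)
  + \sum_(i <- I) \sum_(j <- I) ([&& F i, i < j & (x j < Posz i.+1)%R] : nat)).
Proof.
rewrite -!big_split; apply: eq_bigr => i _; rewrite -!big_split; apply: eq_bigr => j _ /=.
rewrite /F; case: (@eqP _ (x i) (Posz i.+1)) => [->|ni]; case: (@eqP _ (x j) (Posz j.+1)) => [->|nj] /=.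
all: lia.
Qed.

Lemma E2 : \sum_(i <- I) ((x i < 0)%R : nat) * absz (x i) =
  \sum_(i <- I) (~~ F i : nat) * (((x i < 0)%R : nat) *
        (\sum_(j <- I) ((~~ F j) && (absz (x j) < absz (x i))) : nat).+1)
  + \sum_(i <- I) \sum_(j <- I) ([&& (x i < 0)%R, F j & j.+1 < absz (x i)] : nat).
Proof.
rewrite -big_split; apply: eq_big_seq => i; rewrite mem_iota add0n => /andP[_ Hi] /=.
case Hneg: (x i < 0)%R; last by rewrite /= !mul0n muln0 add0n big1.
have nF : ~~ F i by rewrite /F; apply/eqP => E; rewrite E in Hneg.
rewrite nF /= !mul1n.
have [H0 Hn] := andP (Hle i Hi).
have Ha := Hcnt (absz (x i)).-1 (leq_trans (leq_pred _) Hn).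
rewrite prednK // in Ha.
rewrite {1}(_ : absz (x i) = (\sum_(j <- I) (absz (x j) < absz (x i) : nat)).+1);
  last by rewrite Ha prednK.
rewrite addSn; congr S; rewrite -big_split; apply: eq_bigr => j _ /=.
rewrite /F; case: (@eqP _ (x j) (Posz j.+1)) => [->|nj] /=; lia.
Qed.

Lemma E3 : 2 %| (\sum_(i <- I) \sum_(j <- I) ([&& F j, i < j & (Posz j.+1 < x i)%R] : nat)
  + \sum_(i <- I) \sum_(j <- I) ([&& F i, i < j & (x j < Posz i.+1)%R] : nat))
  + \sum_(i <- I) \sum_(j <- I) ([&& (x i < 0)%R, F j & j.+1 < absz (x i)] : nat).
Proof.
rewrite [X in X + _ + _]exchange_big /= [X in _ + _ + X]exchange_big /=.
rewrite -!big_split /=. rewrite big_seq_cond. apply: dvdn_sum => p; rewrite andbT mem_iota add0n => /andP[_ Hp].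
rewrite -!big_split /=.
case Fp: (F p); last first.
  by rewrite big1 // => i _; rewrite andbF.
have xp : x p = Posz p.+1 by apply/eqP.
set S := \sum_(i <- I) _.
have H : S + 2 * \sum_(i <- I) ((i < p) && (absz (x i) < p.+1) : nat) =
   \sum_(i <- I) (i < p : nat) + \sum_(i <- I) (absz (x i) < p.+1 : nat)
   + 2 * \sum_(i <- I) ([&& p < i, (x i < 0)%R & ~~ (absz (x i) < p.+1)] : nat).
  rewrite /S !big_distrr -!big_split; apply: eq_big_seq => i; rewrite mem_iota add0n => /andP[_ Hi] /=.
  apply: ptw.
  - by move=> ->.
  - move=> nip E; apply: nip; apply: Hinj => //; by rewrite xp.
  - by apply/eqP; apply: Hnz.
have Hc := count_iota_lt 0 p n (ltnW Hp); rewrite add0n count_sum in Hc.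
rewrite (Hcnt p (ltnW Hp)) Hc in H.
have : 2 %| S + 2 * \sum_(i <- I) ((i < p) && (absz (x i) < p.+1) : nat).
  by rewrite H addnn -mul2n -mulnDr dvdn_mulr.
by rewrite dvdn_addl // dvdn_mulr.
Qed.

Lemma key : \sum_(i <- I) \sum_(j <- I) ((i<j) && (x j < x i)%R : nat)
   + \sum_(i <- I) ((x i < 0)%R : nat) * absz (x i)
 = \sum_(i <- I) \sum_(j <- I) ([&& ~~ F i, ~~ F j, i < j & (x j < x i)%R] : nat)
   + \sum_(i <- I) (~~ F i : nat) * (((x i < 0)%R : nat) *
        (\sum_(j <- I) ((~~ F j) && (absz (x j) < absz (x i))) : nat).+1) %[mod 2].
Proof.
rewrite E1 E2; move: E3.
set A := \sum_(i <- I) \sum_(j <- I) ([&& ~~ F i, ~~ F j, i < j & (x j < x i)%R] : nat).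
set B := \sum_(i <- I) (~~ F i : nat) * _.
set T1 := \sum_(i <- I) \sum_(j <- I) ([&& F j, i < j & _] : nat).
set T2 := \sum_(i <- I) \sum_(j <- I) ([&& F i, i < j & _] : nat).
set T3 := \sum_(i <- I) \sum_(j <- I) ([&& (x i < 0)%R, F j & _] : nat).
move/dvdnP => [q Hq].
have -> : A + (T1 + T2) + (B + T3) = q * 2 + (A + B) by lia.
by rewrite modnMDl.
Qed.
End Key.
Local Open Scope ring_scope.

Theorem mainTheorem10 (n : nat) (w : seq int) :
  inB n w -> (ellB w = ellB (dp w) %[mod 2])%Z.
Proof.
case/andP => /eqP Hsz Hp.
rewrite !ellBE !modz_nat; congr Posz.
rewrite dp_eq Hsz.
set x := nth 0 w.
have Hw : w = map x (iota 0 n) by rewrite -{1}(mkseq_nth 0 w) Hsz.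
have Hmem : forall i, (i < n)%N -> absz (x i) \in iota 1 n.
  move=> i Hi; rewrite -(perm_mem Hp); apply: map_f; rewrite /x mem_nth // Hsz //.
have Hle : forall i, (i < n)%N -> (0 < absz (x i) <= n)%N.
  by move=> i /Hmem; rewrite mem_iota add1n ltnS.
have Hnz : forall i, (i < n)%N -> x i != 0.
  by move=> i /Hle /andP[h _]; apply/eqP => E; rewrite E in h.
have Hinj : forall i j, (i < n)%N -> (j < n)%N -> absz (x i) = absz (x j) -> i = j.
  move=> i j Hi Hj E; apply/eqP.
  have U : uniq (map absz w) by rewrite (perm_uniq Hp) iota_uniq.
  rewrite -(nth_uniq 0%N _ _ U) ?size_map ?Hsz //.
  by rewrite !(nth_map 0) ?Hsz // E.
have Hcnt : forall a, (a <= n)%N ->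
    \sum_(j <- iota 0 n) (absz (x j) < a.+1 : nat)%N = a.
  move=> a Ha.
  rewrite -(big_map (fun j => absz (x j)) xpredT (fun v => (v < a.+1)%N : nat)).
  rewrite -count_sum.
  have -> : [seq absz (x j) | j <- iota 0 n] = map absz w by rewrite Hw -map_comp.
  rewrite (permP Hp).
  by have := count_iota_lt 1 a n Ha; rewrite add1n.
set P := (fun i : nat => x i != Posz i.+1).
set u := map x (filter P (iota 0 n)).
have Hso : sorted ltn (filter P (iota 0 n)).
  by apply: sorted_filter; [exact: ltn_trans | exact: iota_ltn_sorted].
have Iw : Defs.inv w = (\sum_(i <- iota 0 n) \sum_(j <- iota 0 n) ((i<j) && (x j < x i)%R : nat))%N.
  by rewrite inv_invr {1}Hw invr_map // iota_ltn_sorted.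
have Sw : sN w = (\sum_(i <- iota 0 n) ((x i < 0)%R : nat) * absz (x i))%N.
  by rewrite /sN {1}Hw big_map.
have Iu : Defs.inv (reduce u) = (\sum_(i <- iota 0 n) \sum_(j <- iota 0 n)
     ([&& ~~ (x i == Posz i.+1), ~~ (x j == Posz j.+1), i < j & (x j < x i)%R] : nat))%N.
  rewrite inv_invr reduce_rf invr_mono; last first.
    move=> a b Ha Hb; apply: rf_mono => //.
      by move: Ha => /mapP[i]; rewrite mem_filter mem_iota => /andP[_ /andP[_ Hi]] ->; apply: Hnz.
    by move: Hb => /mapP[i]; rewrite mem_filter mem_iota => /andP[_ /andP[_ Hi]] ->; apply: Hnz.
  rewrite invr_map // big_filter big_mkcond; apply: eq_bigr => i _.
  rewrite big_filter big_mkcond /P /=.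
  case: (x i == Posz i.+1) => /=; last by apply: eq_bigr => j _; case: (x j == Posz j.+1).
  by rewrite big1.
have Su : sN (reduce u) = (\sum_(i <- iota 0 n) (~~ (x i == Posz i.+1) : nat) * (((x i < 0)%R : nat) *
        (\sum_(j <- iota 0 n) (~~ (x j == Posz j.+1) && (absz (x j) < absz (x i))) : nat).+1))%N.
  rewrite sN_reduce big_map big_filter big_mkcond; apply: eq_bigr => i _.
  rewrite /P; case: (x i == Posz i.+1) => /=; first by rewrite mul0n.
  rewrite mul1n /cnt count_map count_filter count_sum; congr (_ * _.+1).
  by apply: eq_bigr => j _ /=; rewrite andbC.
rewrite Iw Sw Iu Su.
exact: key.
Qed.
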